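(* Let $d_n$ be the number of equivalence classes of $n$-diagrams under the action of the dihedral group $D_{2n}$ of order $4n$ (the symmetry group of the $2n$-gon acting on its vertex set $[2n]$). Then $d_n\ge \underline{d}_n := (4n)^{-1}(2n-1)!!$ for $n\ge1$, and \[ d_n \sim \frac{(2n-1)!!}{4n} \quad \text{as } n\to\infty. \]
   Context: A chord diagram of order $n$ (an $n$-diagram) is a 3-regular graph on vertex set $[2n]=\{1,\dots,2n\}$ containing the $2n$-circuit $\Delta_{2n}=(1\,2\,\dots\,2n)$ as a subgraph; the edges not in $\Delta_{2n}$ are the chords (they form a perfect matching of $[2n]$). Given a group $G$ of permutations of $[2n]$ acting on $\Delta_{2n}$, two $n$-diagrams are equivalent if some $g\in G$ takes the chords of the first onto the chords of the second. *)

(* Defs.v *)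
From HB Require Import structures.
From mathcomp Require Import all_boot all_order all_algebra all_fingroup.
From mathcomp Require Import all_classical all_reals topology normedtype sequences.

Set Implicit Arguments.
Unset Strict Implicit.
Unset Printing Implicit Defensive.

(* Vertices of the 2n-gon: [2n] = {1,...,2n} is modelled by 'I_(n.*2) = {0,...,2n-1}. *)

(* An n-diagram is determined by its set of chords, a perfect matching of the
   vertex set; we represent it as a fixed-point-free involution m of 'I_(n.*2)
   (the chords are the pairs {i, m i}). *)
Definition chord_diagrams (n : nat) : {set {perm 'I_(n.*2)}} :=
  [set m : {perm 'I_(n.*2)} | [forall i, (m (m i) == i) && (m i != i)]].

Lemma ord_pos (N : nat) (i : 'I_N) : 0 < N.
Proof. exact: leq_ltn_trans (leq0n i) (ltn_ord i). Qed.

(* Elements of the dihedral group D_{2N} (order 2N) acting on Z/N: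
   dihf N false a : i |-> a + i  (rotations),
   dihf N true  a : i |-> a - i  (reflections), a ranging over 'I_N. *)
Definition dihf (N : nat) (b : bool) (a : 'I_N) (i : 'I_N) : 'I_N :=
  Ordinal (ltn_pmod (if b then a + (N - i) else a + i) (ord_pos i)).

(* m and m' are equivalent under D_{4n} (acting on the 2n vertices) if some
   dihedral g maps every chord {i, m i} of m onto a chord {g i, g (m i)} of m'. *)
Definition dih_equiv (n : nat) (m m' : {perm 'I_(n.*2)}) : Prop :=
  exists (b : bool) (a : 'I_(n.*2)),
    forall i : 'I_(n.*2), m' (dihf b a i) = dihf b a (m i).

Definition d (n : nat) : nat :=
  #|[set [set m' in chord_diagrams n | `[< dih_equiv m m' >]]
        | m in chord_diagrams n]|.

Definition dfact (n : nat) : nat := \prod_(i < n) (i.*2).+1.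

(* Main.v *)
Require Import Defs.
From HB Require Import structures.
From mathcomp Require Import all_boot all_order all_algebra all_fingroup.
From mathcomp Require Import boolp.
From mathcomp Require Import zify ring lra.

Module Helpers.
Set Implicit Arguments.
Unset Strict Implicit.
Unset Printing Implicit Defensive.

Lemma dfactS c : dfact c.+1 = (c.*2).+1 * dfact c.
Proof. by rewrite /dfact big_ord_recr /= mulnC. Qed.

Lemma dfact_gt0 c : 0 < dfact c.
Proof. by elim: c => [|c IH]; rewrite ?dfactS ?muln_gt0 ?IH // /dfact big_ord0. Qed.

Lemma dfact_mono a b : a <= b -> dfact a <= dfact b.
Proof.
move=> /subnK <-; elim: (b - a) => // k IH.
by rewrite addSn dfactS (leq_trans IH) // leq_pmull.
Qed.

Definition Bf (s : nat) := dfact ((s + 3) %/ 4) * 2 ^ s.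

Lemma Bf0 : Bf 0 = 1. Proof. by rewrite /Bf /dfact big_ord0. Qed.

Lemma Bf_mono s t : s <= t -> Bf s <= Bf t.
Proof.
move=> st; rewrite /Bf leq_mul // ?leq_pexp2l // dfact_mono //.
by apply: leq_div2r; rewrite leq_add2r.
Qed.

Lemma Bf_k k s : 0 < k -> k <= s -> (k.*2) * Bf (s - k) <= Bf s.
Proof.
move=> k0 ks; rewrite /Bf.
have e : 2 ^ s = 2 ^ k * 2 ^ (s - k) by rewrite -expnD subnKC.
have hd : dfact ((s - k + 3) %/ 4) <= dfact ((s + 3) %/ 4).
  by apply: dfact_mono; apply: leq_div2r; rewrite leq_add2r leq_subr.
have h2 : k.*2 <= 2 ^ k.
  case: k k0 {ks e hd} => // k _.
  by rewrite expnS -mul2n leq_mul2l /= ltn_expl.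
rewrite e mulnCA mulnA [X in _ <= X]mulnCA [X in _ <= X]mulnA.
by rewrite leq_mul2r (mulnC (2 ^ k)) leq_mul ?orbT.
Qed.

Lemma Bf_4 s : (s.*2) * Bf (s - 4) <= Bf s.
Proof.
have d0 : dfact 0 = 1 by rewrite /dfact big_ord0.
have d1 : dfact 1 = 1 by rewrite dfactS d0.
case: s => [|[|[|[|t]]]]; rewrite /Bf ?d0 ?d1 //.
have -> : t.+4 - 4 = t by rewrite subSS !subSS subn0.
have -> : (t.+4 + 3) %/ 4 = ((t + 3) %/ 4).+1.
  lia.
rewrite dfactS.
set c := (t + 3) %/ 4.
have hc : t <= 4 * c + 3.
  rewrite /c; lia.
rewrite !expnS.
have hd := dfact_gt0 c.
have ht : t.+4.*2 <= 16 * (c.*2).+1 by lia.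
have := leq_mul (leq_mul ht (leqnn (dfact c))) (leqnn (2 ^ t)).
rewrite -!mulnA; move=> H; apply: (leq_trans H); lia.
Qed.

Lemma dfact_low c k : dfact c * (c.*2.+1) ^ k <= dfact (c + k).
Proof.
elim: k => [|k IH]; first by rewrite expn0 muln1 addn0.
rewrite addnS dfactS expnS mulnCA.
by apply: leq_mul => //; rewrite ltnS leq_double leq_addr.
Qed.

Lemma leq_expr m n e : m <= n -> m ^ e <= n ^ e.
Proof. by move=> mn; elim: e => // e IH; rewrite !expnS leq_mul. Qed.

Lemma final_ineq n : 2 ^ 28 <= n ->
  n.+1 * (4 * n * ((4 * n) ^ 2 * Bf (n.*2))) <= dfact n.
Proof.
move=> Hn.
rewrite /Bf.
set c := (n.*2 + 3) %/ 4.
have hc1 : n <= c.*2 by rewrite /c; lia.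
have hc2 : c.*2 <= n.+1 by rewrite /c; lia.
have hcn : c <= n by lia.
set u := n - c.
have hu : n <= u.*2.+1 by rewrite /u; lia.
have hu5 : 5 <= u by rewrite /u; lia.
have := dfact_low c u; rewrite subnKC // => H.
apply: leq_trans H.
have -> : n.+1 * (4 * n * ((4 * n) ^ 2 * (dfact c * 2 ^ n.*2))) =
   dfact c * (n.+1 * 64 * n ^ 3 * 4 ^ n).
  have -> : 2 ^ n.*2 = 4 ^ n by rewrite -muln2 mulnC expnM.
  ring.
rewrite leq_mul2l; apply/orP; right.
have h4 : 4 ^ n <= 4 * 16 ^ (u - 5) * 16 ^ 5.
  rewrite -mulnA -expnD subnK // (_ : 16 = 4 ^ 2) // -expnM -expnS.
  by rewrite leq_pexp2l //; lia.
have hm : (n.+1) ^ 5 * 16 ^ (u - 5) <= c.*2.+1 ^ u.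
  rewrite -{2}(subnK hu5) expnD mulnC leq_mul //.
    by apply: leq_expr; lia.
  by apply: leq_expr; lia.
apply: leq_trans hm.
apply: (@leq_trans (n.+1 * 64 * n ^ 3 * (4 * 16 ^ (u - 5) * 16 ^ 5))).
  by rewrite leq_mul2l h4 orbT.
have h3 : n ^ 3 <= n.+1 ^ 3 by rewrite leq_exp2r.
have h28 : 2 ^ 28 <= n.+1 by lia.
have -> : n.+1 ^ 5 * 16 ^ (u - 5) = (n.+1 * n.+1 ^ 3) * n.+1 * 16 ^ (u - 5) by ring.
have -> : n.+1 * 64 * n ^ 3 * (4 * 16 ^ (u - 5) * 16 ^ 5) =
   (n.+1 * n ^ 3) * (2 ^ 28) * 16 ^ (u - 5).
  ring.
by rewrite leq_mul2r leq_mul ?orbT // leq_mul.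
Qed.


Section Count.
Variable T : finType.

Definition Mh (h : {perm T}) (S : {set T}) : {set {ffun T -> T}} :=
  [set m : {ffun T -> T} | [forall i, m (m i) == i] &&
     [forall i, (m i == i) == (i \notin S)] && [forall i, m (h i) == h (m i)]].

Lemma MhP (h : {perm T}) (S : {set T}) (m : {ffun T -> T}) : reflect
  [/\ forall i, m (m i) = i, forall i, (m i == i) = (i \notin S) &
      forall i, m (h i) = h (m i)] (m \in Mh h S).
Proof.
rewrite inE; apply: (iffP idP).
  case/andP=> /andP[/forallP H1 /forallP H2] /forallP H3.
  by split=> i; [exact: (eqP (H1 i)) | exact: (eqP (H2 i)) | exact: (eqP (H3 i))].
case=> H1 H2 H3; rewrite -!andbA; apply/and3P; split; apply/forallP=> i;
  by rewrite ?H1 ?H2 ?H3.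
Qed.

Lemma comm_pow (h : {perm T}) (m : T -> T) :
  (forall i, m (h i) = h (m i)) -> forall j i, m ((h ^+ j)%g i) = (h ^+ j)%g (m i).
Proof.
move=> Hc; elim=> [|j IH] i; first by rewrite !expg0 !perm1.
by rewrite expgSr !permM Hc IH.
Qed.

Lemma porbit_h (h : {perm T}) z : porbit h (h z) = porbit h z.
Proof. by have := porbit_perm h 1 z; rewrite expg1. Qed.

Lemma in_porbit_h (h : {perm T}) x z : (h z \in porbit h x) = (z \in porbit h x).
Proof. by rewrite -!eq_porbit_mem porbit_h. Qed.

Section Fiber.
Variables (h : {perm T}) (S : {set T}) (x y : T).
Hypothesis xS : x \in S.
Let O := porbit h x :|: porbit h y.

Lemma fiber_facts m : m \in Mh h S -> m x = y ->
  [/\ y \in S, y != x, porbit h x \subset S, porbit h y \subset S &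
      #|porbit h y| = #|porbit h x| ].
Proof.
case/MhP=> H1 H2 H3 mxy.
have Hp := comm_pow H3.
have mx : m x != x by rewrite H2 xS.
have inS z : m z != z -> z \in S by rewrite H2 negbK.
have py : porbit h y = [set m z | z in porbit h x].
  apply/setP=> z; apply/porbitP/imsetP.
    by case=> j ->; exists ((h ^+ j)%g x); rewrite ?mem_porbit // Hp mxy.
  by case=> w /porbitP[j ->] ->; exists j; rewrite Hp mxy.
have mpx : porbit h x \subset S.
  apply/subsetP=> z /porbitP[j ->]; apply: inS.
  by rewrite Hp (inj_eq (@perm_inj _ _)).
split.
- by apply: inS; rewrite -mxy H1 eq_sym.
- by rewrite -mxy.
- exact: mpx.
- rewrite py; apply/subsetP=> _ /imsetP[w wx ->]; apply: inS.
  rewrite H1; move: wx => /porbitP[j ->].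
  by rewrite Hp (inj_eq (@perm_inj _ _)) eq_sym.
- by rewrite py card_imset //; apply: (can_inj H1).
Qed.

Definition cut (m : {ffun T -> T}) : {ffun T -> T} :=
  [ffun z => if z \in O then z else m z].

Lemma cut_in m : m \in Mh h S -> m x = y -> cut m \in Mh h (S :\: O).
Proof.
move=> /MhP[H1 H2 H3] mxy.
have Hp := comm_pow H3.
have Oh z : (h z \in O) = (z \in O) by rewrite !inE !in_porbit_h.
have Om z : z \in O -> m z \in O.
  rewrite !inE => /orP[] /porbitP[j ->]; apply/orP.
    by right; rewrite Hp mxy mem_porbit.
  by left; rewrite -mxy -Hp H1 mem_porbit.
have Om' z : z \notin O -> m z \notin O.
  by apply: contra => /Om; rewrite H1.
have ce z : cut m z = if z \in O then z else m z by rewrite ffunE.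
apply/MhP; split=> i.
- case: (boolP (i \in O)) => iO; first by rewrite !ce iO iO.
  by rewrite (ce i) (negbTE iO) ce (negbTE (Om' i iO)) H1.
- rewrite ce in_setD negb_and negbK; case: ifP => iO; first by rewrite eqxx.
  by rewrite H2.
- by rewrite !ce Oh; case: ifP.
Qed.

Lemma cut_inj : {in [set m in Mh h S | m x == y] &, injective cut}.
Proof.
move=> m1 m2 /setIdP[/MhP[A1 _ C1] /eqP e1] /setIdP[/MhP[A2 _ C2] /eqP e2] E.
apply/ffunP=> z.
have := congr1 (fun f : {ffun T -> T} => f z) E; rewrite /cut !ffunE.
case: ifP => // zO _.
move: zO; rewrite inE => /orP[] /porbitP[j ->].
  by rewrite (comm_pow C1) (comm_pow C2) e1 e2.
by rewrite -{1}e1 -e2 -(comm_pow C1) -(comm_pow C2) A1 A2.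
Qed.

Lemma fiber_le :
  #|[set m in Mh h S | m x == y]| <= #|Mh h (S :\: O)|.
Proof.
rewrite -(card_in_imset cut_inj); apply: subset_leq_card.
apply/subsetP=> _ /imsetP[m /setIdP[mM /eqP mxy] ->].
exact: cut_in.
Qed.

End Fiber.

Lemma Mh_bound (h : {perm T}) : #|[set z | h z == z]| <= 2 ->
  forall S, #|Mh h S| <= Bf #|S|.
Proof.
move=> hfix S; have [s] := ubnP #|S|; elim: s S => // s IH S; rewrite ltnS => Ss.
case: (set_0Vmem S) => [-> | [x xS]].
  rewrite cards0 Bf0.
  apply: (@leq_trans #|[set [ffun z : T => z]]|); last by rewrite cards1.
  apply: subset_leq_card; apply/subsetP => m /MhP[_ H2 _]; rewrite inE.
  by apply/eqP/ffunP => z; rewrite ffunE; apply/eqP; rewrite H2 inE.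
case: (set_0Vmem (Mh h S)) => [-> | [m0 m0M]]; first by rewrite cards0.
set k := #|porbit h x|.
have [_ _ pxS _ _] := fiber_facts xS m0M (erefl _).
have ks : k <= #|S| := subset_leq_card pxS.
have k0 : 0 < k by rewrite lt0n card_porbit_neq0.
have Hsum : #|Mh h S| = \sum_y #|[set m in Mh h S | m x == y]|.
  rewrite -sum1_card (partition_big (fun m : {ffun T -> T} => m x) predT) //=.
  by apply: eq_bigr => y _; rewrite -sum1_card; apply: eq_bigl => m; rewrite inE.
have Hfib y : #|[set m in Mh h S | m x == y]| <=
    (if [set m in Mh h S | m x == y] == set0 then 0
     else Bf (#|S| - #|porbit h x :|: porbit h y|)).
  case: (set_0Vmem [set m in Mh h S | m x == y]) => [-> | [m]]; first by rewrite cards0.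
  move=> mF; have /negbTE -> : [set m in Mh h S | m x == y] != set0.
    by apply/set0Pn; exists m.
  move: mF => /setIdP[mM /eqP mxy].
  have [yS yx pxS' pyS _] := fiber_facts xS mM mxy.
  set O := porbit h x :|: porbit h y.
  have OS : O \subset S by rewrite subUset pxS' pyS.
  have xO : x \in O by rewrite inE porbit_id.
  have cD : #|S :\: O| = #|S| - #|O| by rewrite cardsD (setIidPr OS).
  have cO : 0 < #|O| by rewrite card_gt0; apply/set0Pn; exists x.
  apply: (leq_trans (fiber_le h S x y)); rewrite -/O -cD.
  apply: IH; rewrite cD; apply: leq_trans Ss.
  by rewrite ltn_subrL cO /=; apply: leq_trans (subset_leq_card OS).
have Hne y : [set m in Mh h S | m x == y] != set0 ->
    [/\ y \in S, y != x, porbit h y \subset S, #|porbit h y| = k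
      & (h x = x -> h y = y)].
  case/set0Pn=> m /setIdP[/[dup] mM /MhP[_ _ H3] /eqP mxy].
  have [yS yx _ pyS cy] := fiber_facts xS mM mxy.
  by split=> // hx; rewrite -mxy -H3 hx.
rewrite Hsum.
have [k1|k2] := leqP k 1.
  have hx : h x = x.
    have k1' : #|porbit h x| == 1 by rewrite eqn_leq k1 k0.
    have /cards1P[a ea] := k1'.
    have := porbit_id h x; have := mem_porbit h 1 x; rewrite expg1 ea !inE.
    by move=> /eqP -> /eqP ->.
  pose F' := [set y | (h y == y) && (y != x)].
  apply: (@leq_trans (\sum_y (if y \in F' then Bf (#|S| - 2) else 0))).
    apply: leq_sum => y _; apply: (leq_trans (Hfib y)).
    case: eqP => [_|/eqP ne]; first by case: ifP.
    have [yS yx pyS cy hy] := Hne y ne.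
    rewrite inE hy // eqxx yx /=; apply: Bf_mono; apply: leq_sub2l.
    apply: (@leq_trans #|[set x; y]|); first by rewrite cards2 eq_sym yx.
    by apply: subset_leq_card; rewrite subUset !sub1set !inE !porbit_id orbT.
  rewrite -big_mkcond sum_nat_const /=.
  have cF : #|F'| <= 1.
    have : F' \subset [set z | h z == z] :\ x.
      by apply/subsetP=> z; rewrite !inE => /andP[-> ->].
    move/subset_leq_card; move: hfix; rewrite (cardsD1 x) !inE hx eqxx /=.
    by move=> A B; apply: leq_trans B _; rewrite -ltnS.
  apply: (@leq_trans (1 * Bf (#|S| - 2))); first by rewrite leq_mul2r cF orbT.
  by rewrite mul1n Bf_mono // leq_subr.
apply: (@leq_trans (\sum_y ((if y \in porbit h x then Bf (#|S| - k) else 0) +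
                            (if y \in S then Bf (#|S| - 4) else 0)))).
  apply: leq_sum => y _; apply: (leq_trans (Hfib y)).
  case: eqP => [_|/eqP ne]; first by [].
  have [yS yx pyS cy _] := Hne y ne.
  case: (boolP (y \in porbit h x)) => ypx.
    have -> : porbit h x :|: porbit h y = porbit h x.
      by rewrite (eqP (_ : porbit h y == porbit h x)) ?setUid // eq_porbit_mem.
    exact: leq_addr.
  rewrite yS add0n; apply: Bf_mono; apply: leq_sub2l.
  have dj : porbit h x :&: porbit h y = set0.
    apply/setP=> z; rewrite !inE; apply/negbTE; apply/negP=> /andP[zx zy].
    have e1 : porbit h z = porbit h x by apply/eqP; rewrite eq_porbit_mem.
    have e2 : porbit h z = porbit h y by apply/eqP; rewrite eq_porbit_mem.
    by move: ypx; rewrite -e1 e2 porbit_id.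
  by rewrite cardsU dj cards0 subn0 cy -/k; lia.
rewrite big_split /= -!big_mkcond !sum_nat_const /= -/k.
have := Bf_k k0 ks; have := Bf_4 #|S|.
rewrite -!doubleMl.
set a := k * _; set b := #|S| * _; set c := Bf _.
lia.
Qed.

Fixpoint Fc (s : nat) : nat :=
  match s with 0 => 1 | 1 => 0 | s'.+2 => s'.+1 * Fc s' end.

Lemma porbit1 z : porbit (1 : {perm T}) z = [set z].
Proof.
apply/setP=> w; rewrite inE; apply/porbitP/eqP => [[j ->]|->].
  by rewrite expg1n perm1.
by exists 0; rewrite expg0 perm1.
Qed.

Definition glue (x y : T) (m : {ffun T -> T}) : {ffun T -> T} :=
  [ffun z => if z == x then y else if z == y then x else m z].

Lemma glue_in (S : {set T}) (x y : T) (m : {ffun T -> T}) : x \in S -> y \in S -> y != x ->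
  m \in Mh 1 (S :\: [set x; y]) ->
  [/\ glue x y m \in Mh 1 S, glue x y m x = y & cut 1 x y (glue x y m) = m].
Proof.
move=> xS yS yx /MhP[H1 H2 _].
have mx : m x = x by apply/eqP; rewrite H2 !inE eqxx.
have my : m y = y by apply/eqP; rewrite H2 !inE eqxx orbT.
have mz z : z != x -> z != y -> (m z != x) && (m z != y).
  move=> zx zy; apply/andP; split.
    by apply/eqP => e; move: zx; rewrite -(H1 z) e mx eqxx.
  by apply/eqP => e; move: zy; rewrite -(H1 z) e my eqxx.
have ge z : glue x y m z = if z == x then y else if z == y then x else m z.
  by rewrite ffunE.
split.
- apply/MhP; split=> i; last by rewrite !perm1.
  + rewrite !ge; case: (eqVneq i x) => [->|ix]; first by rewrite (negbTE yx) eqxx.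
    case: (eqVneq i y) => [->|iy]; first by rewrite eqxx.
    by case/andP: (mz i ix iy) => /negbTE -> /negbTE ->; rewrite H1.
  + rewrite ge; case: (eqVneq i x) => [->|ix]; first by rewrite (negbTE yx) xS.
    case: (eqVneq i y) => [->|iy]; first by rewrite eq_sym (negbTE yx) yS.
    by rewrite H2 !inE negb_and negb_or ix iy.
- by rewrite ge eqxx.
- apply/ffunP=> z; rewrite ffunE !porbit1 ge !inE.
  case: (eqVneq z x) => [->|zx] /=; first by rewrite mx.
  by case: (eqVneq z y) => [->|zy] /=.
Qed.

Lemma Mh1_card (S : {set T}) : #|Mh 1 S| = Fc #|S|.
Proof.
have [s] := ubnP #|S|; elim: s S => // s IH S; rewrite ltnS => Ss.
case: (set_0Vmem S) => [-> | [x xS]].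
  rewrite cards0 /=; apply/eqP/cards1P; exists [ffun z : T => z].
  apply/setP=> m; rewrite inE; apply/MhP/eqP => [[_ H2 _]|->].
    by apply/ffunP => z; rewrite ffunE; apply/eqP; rewrite H2 inE.
  by split=> i; rewrite ?ffunE ?eqxx ?inE ?perm1.
have Hsum : #|Mh 1 S| = \sum_y #|[set m in Mh 1 S | m x == y]|.
  rewrite -sum1_card (partition_big (fun m : {ffun T -> T} => m x) predT) //=.
  by apply: eq_bigr => y _; rewrite -sum1_card; apply: eq_bigl => m; rewrite inE.
have cS : #|S| = #|S :\ x|.+1 by rewrite (cardsD1 x S) xS.
have Hy y : #|[set m in Mh 1 S | m x == y]| =
            (if y \in S :\ x then Fc (#|S| - 2) else 0).
  rewrite !inE; case: (boolP ((y != x) && (y \in S))) => [/andP[yx yS]|H].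
    have c2 : #|S :\: [set x; y]| = #|S| - 2.
      rewrite cardsD (setIidPr _) ?cards2 1?eq_sym ?yx //.
      by rewrite subUset !sub1set xS yS.
    have IH' : #|Mh 1 (S :\: [set x; y])| = Fc (#|S| - 2).
      rewrite -c2; apply: IH; rewrite c2; apply: leq_trans Ss; lia.
    apply/eqP; rewrite eqn_leq; apply/andP; split.
      by rewrite -IH'; have := @fiber_le 1 S x y; rewrite !porbit1.
    rewrite -IH' -(@card_in_imset _ _ (glue x y)); last first.
      move=> m1 m2 M1 M2 E.
      have [_ _ <-] := glue_in xS yS yx M1.
      by have [_ _ <-] := glue_in xS yS yx M2; rewrite E.
    apply: subset_leq_card; apply/subsetP=> _ /imsetP[m M ->].
    by have [G1 G2 _] := glue_in xS yS yx M; rewrite inE G1 G2 eqxx.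
  apply/eqP; rewrite cards_eq0; apply/eqP/setP=> m; rewrite !inE.
  apply/negbTE; apply/negP=> /andP[mM /eqP mxy].
  have {}mM : m \in Mh 1 S by rewrite inE.
  have [yS yx _ _ _] := fiber_facts xS mM mxy.
  by move: H; rewrite yS yx.
rewrite Hsum (eq_bigr _ (fun y _ => Hy y)) -big_mkcond sum_nat_const.
rewrite cS; case: #|S :\ x| => [|t] //=.
by rewrite subSS subn1.
Qed.

Lemma Fc_double n : Fc (n.*2) = dfact n.
Proof.
elim: n => [|n IH]; first by rewrite /dfact big_ord0.
by rewrite doubleS /= IH dfactS.
Qed.

End Count.

Import GRing.Theory.

Section D.
Variable n' : nat.
Local Notation n := n'.+1.
Local Notation N := (n.*2).
Local Notation ZN := 'Z_N.
Local Open Scope ring_scope.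

Lemma dihfZ (b : bool) (a i : 'I_N) :
  dihf b a i = (if b then (a : ZN) - i else (a : ZN) + i).
Proof.
apply: val_inj; case: b; last by [].
by rewrite /= modnDmr.
Qed.

Definition dcomp (b1 : bool) (a1 : 'I_N) (b2 : bool) (a2 : 'I_N) : 'I_N :=
  if b1 then (a1 : ZN) - a2 else (a1 : ZN) + a2.

Lemma dihf_comp (b1 : bool) (a1 : 'I_N) (b2 : bool) (a2 i : 'I_N) :
  dihf b1 a1 (dihf b2 a2 i) = dihf (b1 (+) b2) (dcomp b1 a1 b2 a2) i.
Proof. by rewrite !dihfZ /dcomp; case: b1; case: b2 => /=; ring. Qed.

Definition dinv (b : bool) (a : 'I_N) : 'I_N := if b then a else - (a : ZN).

Lemma dihf_invl (b : bool) (a i : 'I_N) : dihf b (dinv b a) (dihf b a i) = i.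
Proof. by rewrite !dihfZ /dinv; case: b => /=; ring. Qed.

Lemma dihf_invr (b : bool) (a i : 'I_N) : dihf b a (dihf b (dinv b a) i) = i.
Proof. by rewrite !dihfZ /dinv; case: b => /=; ring. Qed.

Lemma dihf_inj (b : bool) (a : 'I_N) : injective (dihf b a).
Proof. exact: (can_inj (dihf_invl b a)). Qed.

Lemma dihf_id (i : 'I_N) : dihf false (0 : ZN) i = i.
Proof. by rewrite dihfZ /= add0r. Qed.

Lemma nat_half (dv : nat) : (dv < N)%N -> ((dv + dv) %% N = 0)%N ->
  dv = 0%N \/ dv = n.
Proof.
move=> Nd e.
have : (N %| dv + dv)%N by apply/eqP.
rewrite addnn -!muln2 dvdn_pmul2r // => /dvdnP[k dk].
have k2 : (k < 2)%N.
  by move: Nd; rewrite dk -muln2; nia.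
by case: k k2 dk => [|[|]] // _ dk; [left | right]; rewrite dk ?mul1n.
Qed.

Lemma double_zero (d : ZN) : d + d = 0 -> d = 0 \/ d = inZp n.
Proof.
move=> /(congr1 val) /= e.
case: (nat_half (ltn_ord d) e) => dv; [left | right]; apply: val_inj => /=.
  by rewrite dv.
by rewrite dv modn_small //; change (n < N)%N; lia.
Qed.

Lemma card_half (c : ZN) : (#|[set i : ZN | (i + i == c)%R]| <= 2)%N.
Proof.
case: (pickP (fun i : ZN => i + i == c)) => [i0 /eqP e0 | none]; last first.
  by rewrite eq_card0 // => i; rewrite inE none.
apply: (@leq_trans #|[set i0; i0 + inZp n]|); last by rewrite cards2; case: (_ != _).
apply: subset_leq_card; apply/subsetP=> j; rewrite !inE => /eqP ej.
have : (j - i0) + (j - i0) = 0 by rewrite addrACA -opprD ej e0 subrr.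
case/double_zero => /eqP; rewrite subr_eq ?add0r => /eqP ->; first by rewrite eqxx.
by rewrite addrC eqxx orbT.
Qed.

Lemma dihf_fix2 (p q : bool * 'I_N) :
  p != q -> (#|[set i | dihf p.1 p.2 i == dihf q.1 q.2 i]| <= 2)%N.
Proof.
case: p q => [b1 a1] [b2 a2] /=; rewrite xpair_eqE negb_and => ne.
case: (eqVneq b1 b2) ne => [<-|bne] ne.
  rewrite /= in ne.
  rewrite eq_card0 // => i; rewrite !inE !dihfZ.
  apply/negbTE; apply: contra ne => /eqP.
  by case: b1 => e; apply/eqP; apply: addIr e.
pose c : ZN := if b1 then (a1 : ZN) - a2 else (a2 : ZN) - a1.
apply: (leq_trans _ (card_half c)); apply: subset_leq_card.
apply/subsetP => i; rewrite !inE !dihfZ => /eqP e.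
rewrite /c; clear c; move: bne e; case: b1; case: b2 => //= _ e.
  have h : (a1 : ZN) - a2 - (i + i) = ((a1 : ZN) - i) - ((a2 : ZN) + i) by ring.
  by rewrite eq_sym -subr_eq0 h e subrr.
have h : (a2 : ZN) - a1 - (i + i) = ((a2 : ZN) - i) - ((a1 : ZN) + i) by ring.
by rewrite eq_sym -subr_eq0 h e subrr.
Qed.
End D.

Lemma card_bigcup_le (I T : finType) (P : pred I) (F : I -> {set T}) :
  #|\bigcup_(i | P i) F i| <= \sum_(i | P i) #|F i|.
Proof.
elim/big_rec2: _ => [|i k U _ leUn]; first by rewrite cards0.
by rewrite (leq_trans (leq_card_setU (F i) U).1) ?leq_add2l.
Qed.

Section E.
Variable n' : nat.
Local Notation n := n'.+1.
Local Notation N := (n.*2).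
Local Notation X := (chord_diagrams n).
Local Notation G := (bool * 'I_N)%type.

Lemma XP (m : {perm 'I_N}) : reflect (forall i, m (m i) = i /\ m i != i) (m \in X).
Proof.
rewrite inE; apply: (iffP forallP) => H i.
  by case/andP: (H i) => /eqP -> ->.
by case: (H i) => -> ->; rewrite eqxx.
Qed.

Definition toF (m : {perm 'I_N}) : {ffun 'I_N -> 'I_N} := [ffun i => m i].

Lemma toF_inj : injective toF.
Proof.
move=> m1 m2 E; apply/permP => i.
by have := congr1 (fun f : {ffun 'I_N -> 'I_N} => f i) E; rewrite !ffunE.
Qed.

Lemma card_X : #|X| = dfact n.
Proof.
rewrite -(card_imset _ toF_inj).
have -> : toF @: X = Mh 1 [set: 'I_N].
  apply/setP=> f; apply/imsetP/MhP.
    case=> m /XP H ->; split=> i; rewrite ?ffunE.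
    - by case: (H i).
    - by rewrite inE /=; apply/negbTE; case: (H i).
    - by rewrite !perm1.
  case=> H1 H2 _; exists (perm (can_inj H1)).
    apply/XP => i; rewrite !permE; split=> //.
    by rewrite H2 inE.
  by apply/ffunP=> i; rewrite ffunE permE.
by rewrite Mh1_card cardsT card_ord Fc_double.
Qed.

Definition Fx (h : {perm 'I_N}) := [set m in X | [forall i, m (h i) == h (m i)]].

Lemma card_Fx (h : {perm 'I_N}) : #|[set z | h z == z]| <= 2 -> #|Fx h| <= Bf N.
Proof.
move=> hfix.
rewrite -(card_imset _ toF_inj).
apply: (@leq_trans #|Mh h [set: 'I_N]|); last first.
  by have := Mh_bound hfix [set: 'I_N]; rewrite cardsT card_ord.
apply: subset_leq_card; apply/subsetP=> _ /imsetP[m /setIdP[/XP H /forallP C] ->].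
apply/MhP; split=> i; rewrite ?ffunE.
- by case: (H i).
- by rewrite inE /=; apply/negbTE; case: (H i).
- by apply/eqP; apply: C.
Qed.


Definition gp (p : G) : {perm 'I_N} := perm (@dihf_inj n' p.1 p.2).

Lemma gpE p i : gp p i = dihf p.1 p.2 i.
Proof. by rewrite permE. Qed.

Definition conjd (p : G) (m : {perm 'I_N}) : {perm 'I_N} := ((gp p)^-1 * m * gp p)%g.

Lemma conjdE p m i : conjd p m i = gp p (m ((gp p)^-1%g i)).
Proof. by rewrite !permM. Qed.

Lemma conjd_X p m : m \in X -> conjd p m \in X.
Proof.
move=> /XP H; apply/XP => i; rewrite !conjdE permK; split.
  by case: (H ((gp p)^-1%g i)) => -> _; rewrite permKV.
apply: contra (proj2 (H ((gp p)^-1%g i))) => /eqP E.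
by rewrite -(inj_eq (@perm_inj _ (gp p))) E permKV.
Qed.

Lemma conjd_equiv p m : dih_equiv m (conjd p m).
Proof. by exists p.1, p.2 => i; rewrite conjdE -!gpE permK. Qed.

Lemma equiv_conjd (m m' : {perm 'I_N}) : dih_equiv m m' -> exists p, m' = conjd p m.
Proof.
case=> b [a E]; exists (b, a); apply/permP => j.
rewrite conjdE -{1}(permKV (gp (b, a)) j) !gpE /=.
by rewrite E.
Qed.

Definition Cl (m : {perm 'I_N}) := [set m' in X | `[< dih_equiv m m' >]].

Lemma Cl_eq (m : {perm 'I_N}) : m \in X -> Cl m = [set conjd p m | p in [set: G]].
Proof.
move=> mX; apply/setP => m'; rewrite inE; apply/andP/imsetP.
  by case=> _ /asboolP /equiv_conjd [p ->]; exists p.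
by case=> p _ ->; split; [exact: conjd_X | apply/asboolP; exact: conjd_equiv].
Qed.

Lemma card_G : #|[set: G]| = 4 * n.
Proof. by rewrite cardsT card_prod card_bool card_ord; lia. Qed.

Lemma card_Cl (m : {perm 'I_N}) : m \in X -> #|Cl m| <= 4 * n.
Proof. by move=> mX; rewrite Cl_eq // -card_G leq_imset_card. Qed.

Lemma equiv_refl (m : {perm 'I_N}) : dih_equiv m m.
Proof. by exists false, (0%R : 'Z_N) => i; rewrite (dihf_id i) (dihf_id (m i)). Qed.

Lemma equiv_sym (m m' : {perm 'I_N}) : dih_equiv m m' -> dih_equiv m' m.
Proof.
case=> b [a E]; exists b, (dinv b a) => j.
have := E (dihf b (dinv b a) j); rewrite dihf_invr => ->.
by rewrite dihf_invl.
Qed.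

Lemma equiv_trans (m1 m2 m3 : {perm 'I_N}) :
  dih_equiv m1 m2 -> dih_equiv m2 m3 -> dih_equiv m1 m3.
Proof.
case=> b1 [a1 E1] [b2 [a2 E2]]; exists (b2 (+) b1), (dcomp b2 a2 b1 a1) => i.
by rewrite -!dihf_comp E2 E1.
Qed.

Definition Rd (m m' : {perm 'I_N}) := `[< dih_equiv m m' >].

Lemma Rd_equiv : {in X & &, equivalence_rel Rd}.
Proof.
move=> x y z _ _ _; split; first by apply/asboolP; exact: equiv_refl.
move=> /asboolP Exy; apply/asboolP/asboolP => H.
  exact: equiv_trans (equiv_sym Exy) H.
exact: equiv_trans Exy H.
Qed.

Lemma d_eq : d n = #|equivalence_partition Rd X|.
Proof. by []. Qed.

End E.

Section F.
Variable n' : nat.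
Local Notation n := n'.+1.
Local Notation N := (n.*2).
Local Notation X := (chord_diagrams n).
Local Notation G := (bool * 'I_N)%type.

Lemma lower_bound : dfact n <= 4 * n * d n.
Proof.
rewrite d_eq -card_X (card_partition (equivalence_partitionP (@Rd_equiv n'))).
rewrite mulnC -sum_nat_const; apply: leq_sum => A /imsetP[m mX ->].
exact: card_Cl mX.
Qed.

Definition Bad := [set m in X | #|Cl m| < 4 * n].

Lemma upper_bound : 4 * n * d n <= dfact n + 4 * n * #|Bad|.
Proof.
rewrite d_eq -card_X (card_partition (equivalence_partitionP (@Rd_equiv n'))).
set P := equivalence_partition _ _.
have sub : [set A in P | #|A| < 4 * n] \subset (@Cl n') @: Bad.
  apply/subsetP => A; rewrite inE => /andP[/imsetP[m mX ->] c].
  by apply: imset_f; rewrite inE mX.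
have cB : #|[set A in P | #|A| < 4 * n]| <= #|Bad|.
  exact: leq_trans (subset_leq_card sub) (leq_imset_card _ _).
apply: (@leq_trans (\sum_(A in P) (#|A| + (if #|A| < 4 * n then 4 * n else 0)))).
  rewrite mulnC -sum_nat_const; apply: leq_sum => A _.
  by case: ltnP => h; rewrite ?addn0 ?leq_addl.
rewrite big_split /= leq_add2l -big_mkcondr /=.
rewrite (eq_bigl (fun A => A \in [set A in P | #|A| < 4 * n])); last first.
  by move=> A; rewrite inE.
by rewrite sum_nat_const mulnC leq_mul2l cB orbT.
Qed.

Definition hh (pq : G * G) : {perm 'I_N} := (gp pq.1 * (gp pq.2)^-1)%g.

Lemma hh_fix pq : pq.1 != pq.2 -> #|[set z | hh pq z == z]| <= 2.
Proof.
move=> ne; apply: leq_trans (dihf_fix2 ne).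
apply: subset_leq_card; apply/subsetP => z; rewrite !inE /hh permM => /eqP E.
by rewrite -!gpE -{2}E permKV.
Qed.

Lemma bad_bound : #|Bad| <= (4 * n) ^ 2 * Bf N.
Proof.
have sub : Bad \subset \bigcup_(pq : G * G | pq.1 != pq.2) Fx (hh pq).
  apply/subsetP => m; rewrite inE => /andP[mX cm].
  case: (boolP [exists p : G, exists q : G, (p != q) && (conjd p m == conjd q m)]).
    case/existsP => p /existsP[q /andP[pq /eqP E]].
    apply/bigcupP; exists (p, q) => //.
    rewrite inE mX /=; apply/forallP => i; apply/eqP.
    have := congr1 (fun f : {perm 'I_N} => f (gp p i)) E.
    rewrite !conjdE permK /hh !permM => ->.
    by rewrite permK.
  move=> H; exfalso.
  have inj : {in [set: G] &, injective (fun p : G => conjd p m)}.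
    move=> p q _ _ E; apply/eqP; apply/negPn; apply/negP => pq.
    apply: (negP H); apply/existsP; exists p; apply/existsP; exists q.
    by rewrite pq E eqxx.
  by move: cm; rewrite Cl_eq // card_in_imset // card_G ltnn.
apply: leq_trans (subset_leq_card sub) _.
apply: leq_trans (card_bigcup_le _ _) _.
apply: (@leq_trans (\sum_(pq : G * G) Bf N)).
  rewrite big_mkcond /=; apply: leq_sum => pq _.
  by case: ifP => // ne; apply: card_Fx; apply: hh_fix; rewrite ne.
rewrite (eq_bigl (fun pq => pq \in [set: G * G])); last by move=> pq; rewrite inE.
by rewrite sum_nat_const cardsT card_prod -cardsT card_G (expnS _ 1) expn1.
Qed.

End F.

End Helpers.
Import Helpers.

From mathcomp Require Import all_classical all_reals topology normedtype sequences.
Import numFieldNormedType.Exports.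
Import Order.TTheory GRing.Theory Num.Theory.
Local Open Scope classical_set_scope.
Local Open Scope ring_scope.

Lemma nat_upper n' : (2 ^ 28 <= n'.+1)%N ->
  (n'.+2 * (4 * n'.+1 * d n'.+1) <= n'.+3 * dfact n'.+1)%N.
Proof.
move=> Hn.
have U := upper_bound n'.
have Bb := bad_bound n'.
have F := final_ineq Hn.
set f := dfact _ in U F *; set D := (4 * _ * d _)%N in U *.
set E := (4 * n'.+1 * ((4 * n'.+1) ^ 2 * Bf _))%N in F.
have UE : (D <= f + E)%N.
  by apply: leq_trans U _; rewrite leq_add2l /E leq_mul2l Bb orbT.
apply: (@leq_trans (n'.+2 * (f + E))); first by rewrite leq_mul2l UE orbT.
by rewrite mulnDr (mulSn n'.+2 f) addnC leq_add2r.
Qed.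

Theorem corollary2 (R : realType) :
  (forall n : nat, (0 < n)%N ->
     (dfact n)%:R / (4 * n)%:R <= (d n)%:R :> R) /\
  ((fun n : nat => (d n)%:R / ((dfact n)%:R / (4 * n)%:R) : R) @ \oo --> (1 : R)).
Proof.
split.
  case=> [//|n'] _.
  rewrite ler_pdivrMr ?ltr0n ?muln_gt0 // -natrM ler_nat mulnC.
  exact: lower_bound.
apply: (@squeeze_cvgr _ _ _ _ (cst 1) (fun n => 1 + harmonic n)); last 2 first.
- exact: cvg_cst.
- rewrite -[X in _ --> X]addr0; apply: cvgD; [exact: cvg_cst | exact: cvg_harmonic].
exists (2 ^ 28)%N => // n /= Hn.
case: n Hn => [|n'] Hn; first by rewrite leqn0 expn_eq0 in Hn.
have L := lower_bound n'.
have U := @nat_upper n' Hn.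
clear Hn.
set F := (dfact n'.+1)%:R : R; set K := (4 * n'.+1)%:R : R; set D := (d n'.+1)%:R : R.
have F0 : 0 < F by rewrite ltr0n dfact_gt0.
have K0 : 0 < K by rewrite ltr0n.
rewrite invf_div mulrA; apply/andP; split.
  rewrite /= ler_pdivlMr // mul1r /F /D /K -natrM ler_nat mulnC.
  exact: L.
have U' : (n'.+2)%:R * (D * K) <= (n'.+3)%:R * F.
  by rewrite /D /K /F -!natrM ler_nat (mulnC (d _)).
have e : 1 + (n'.+2)%:R^-1 = (n'.+3)%:R / (n'.+2)%:R :> R.
  by rewrite -[n'.+3%:R]natr1 mulrDl divff ?pnatr_eq0 // div1r.
rewrite e ler_pdivrMr // mulrAC ler_pdivlMr ?ltr0n // mulrC.
exact: U'.
Qed.
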